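(* Let $M\in\mathbb{W}^{n\times n}$ and let $\mathcal{I}_m\subseteq\mathcal{I}_{m-1}\subseteq\dots\subseteq\mathcal{I}_1\subseteq\{1,\dots,n\}$ with $\mathcal{I}_m$ nonempty. If the principal submatrix of $M$ indexed by $\{1,\dots,n\}\setminus\mathcal{I}_m$ is upper triangular with nonzero diagonal, then the successive reduction $r(M;\mathcal{I}_1,\dots,\mathcal{I}_{m-1},\mathcal{I}_m)$ is defined and $r(M;\mathcal{I}_1,\dots,\mathcal{I}_{m-1},\mathcal{I}_m)=r(M;\mathcal{I}_m)$.
   Context: $\mathbb{W}$ is the field of rational functions in a complex variable $\lambda$ with complex coefficients. For $M\in\mathbb{W}^{n\times n}$ and an index set $\mathcal{I}=\{i_1<\dots<i_k\}\subseteq\{1,\dots,n\}$, the principal submatrix indexed by $\mathcal{I}$ is the $k\times k$ matrix with $(s,t)$ entry $M_{i_si_t}$ (indices kept in increasing order; ''upper triangular'' refers to this order). For nonempty $\mathcal{I}$ with complement $\bar{\mathcal{I}}=\{1,\dots,n\}\setminus\mathcal{I}$: if $\mathcal{I}=\{1,\dots,n\}$ set $r(M;\mathcal{I})=M$; otherwise let $A$ be the principal submatrix indexed by $\bar{\mathcal{I}}$, $D$ that indexed by $\mathcal{I}$, $B$ the submatrix with rows $\bar{\mathcal{I}}$ and columns $\mathcal{I}$, $C$ the submatrix with rows $\mathcal{I}$ and columns $\bar{\mathcal{I}}$; if $A$ is invertible, the reduction of $M$ over $\mathcal{I}$ is $r(M;\mathcal{I})=D-CA^{-1}B$, a matrix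 whose rows and columns are indexed by the elements of $\mathcal{I}$ in increasing order. For $\mathcal{J}\subseteq\mathcal{I}$ define $r(M;\mathcal{I},\mathcal{J})=r(r(M;\mathcal{I});\mathcal{J})$ (with $\mathcal{J}$ read as a set of indices of $r(M;\mathcal{I})$), and similarly for longer nested sequences, provided each step is defined. *)

(* Defs.v *)
From mathcomp Require Import all_boot all_algebra.
From mathcomp Require Import fraction complex Rstruct.
Set Implicit Arguments. Unset Strict Implicit. Unset Printing Implicit Defensive.
Import GRing.Theory.
Local Open Scope ring_scope.

Definition W : fieldType := {fraction {poly (Rdefinitions.R)[i]}}.

(* Principal submatrix of M indexed by S (elements of S in increasing order:
   enum_val enumerates S following the increasing order of 'I_n). *)
Definition psub (F : fieldType) n (M : 'M[F]_n) (S : {set 'I_n}) : 'M[F]_#|S| :=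
  \matrix_(s, t) M (enum_val s) (enum_val t).

Definition upper_tri_nzdiag (F : fieldType) k (A : 'M[F]_k) : Prop :=
  (forall s t : 'I_k, (t < s)%N -> A s t = 0) /\ (forall s : 'I_k, A s s != 0).

(* Representation convention: a matrix "whose rows and columns are indexed by
   the elements of U" (U a subset of {1..n}) is stored as an n x n matrix whose
   entries (i,j) with i,j in U are the meaningful ones; entries outside U x U
   are set to 0 in outputs of [red] and are never read. *)
Definition red (F : fieldType) n (U : {set 'I_n}) (M : 'M[F]_n) (I : {set 'I_n})
  : option 'M[F]_n :=
  if (I != set0) && (I \subset U) then
    if I == U then
      Some (\matrix_(i, j) if (i \in I) && (j \in I) then M i j else 0)
    else
      let A := psub M (U :\: I) in
      if A \in unitmx then
        let Ai := invmx A in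
        Some (\matrix_(i, j)
          if (i \in I) && (j \in I) then
            M i j - \sum_(s < #|U :\: I|) \sum_(t < #|U :\: I|)
                      M i (enum_val s) * Ai s t * M (enum_val t) j
          else 0)
      else None
  else None.

Fixpoint red_seq (F : fieldType) n (U : {set 'I_n}) (M : 'M[F]_n)
  (Is : seq {set 'I_n}) : option 'M[F]_n :=
  match Is with
  | [::] => Some M
  | J :: Js => obind (fun M' => red_seq J M' Js) (red U M J)
  end.

(* Main.v *)
Require Import Defs.
From mathcomp Require Import all_boot all_algebra.
Set Implicit Arguments. Unset Strict Implicit. Unset Printing Implicit Defensive.
Import GRing.Theory.
Local Open Scope ring_scope.
Definition vm (F : fieldType) n (x : 'I_n -> F) (M : 'M[F]_n) j := \sum_k x k * M k j.
Lemma enum_sorted n (S : {set 'I_n}) : sorted (fun a b : 'I_n => (a < b)%N) (enum S).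
Proof.
have tr : transitive (fun a b : 'I_n => (a < b)%N) by move=> a b c; apply: ltn_trans.
apply: (subseq_sorted tr (s2 := enum 'I_n)).
  by rewrite enumT {1}/enum_mem filter_subseq.
by have := iota_ltn_sorted 0 n; rewrite -val_enum_ord sorted_map.
Qed.

Lemma enum_val_ltn n (S : {set 'I_n}) (a b : 'I_#|S|) :
  (enum_val a < enum_val b)%N = (a < b)%N.
Proof.
have tr : transitive (fun a b : 'I_n => (a < b)%N) by move=> x y z; apply: ltn_trans.
have H : forall a b : 'I_#|S|, (a < b)%N -> (enum_val a < enum_val b)%N.
  move=> x y xy; rewrite /enum_val.
  rewrite (set_nth_default (enum_default y) (enum_default x)); last by rewrite -cardE.
  apply: (sorted_ltn_nth tr _ (enum_sorted S)) => //; by rewrite inE -cardE.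
apply/idP/idP; last exact: H.
move=> lt; rewrite ltnNge; apply/negP; rewrite leq_eqVlt => /orP[/eqP ba|].
  by move: lt; rewrite (val_inj ba) ltnn.
by move/H; rewrite ltnNge ltnW.
Qed.
Lemma psub_unit_sub (F : fieldType) n (M : 'M[F]_n) (X Y : {set 'I_n}) :
  X \subset Y -> upper_tri_nzdiag (psub M Y) -> psub M X \in unitmx.
Proof.
move=> XY [tri dg].
have inY : forall s : 'I_#|X|, enum_val s \in Y.
  by move=> s; apply: (subsetP XY); apply: enum_valP.
rewrite unitmxE unitfE -det_tr det_trig; last first.
  apply/is_trig_mxP => i j ij; rewrite !mxE.
  have := tri (enum_rank_in (inY j) (enum_val j)) (enum_rank_in (inY i) (enum_val i)).
  rewrite /psub mxE !enum_rankK_in //; apply.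
  by rewrite -enum_val_ltn !enum_rankK_in // enum_val_ltn.
rewrite prodf_seq_neq0; apply/allP => s _ /=; rewrite !mxE.
have := dg (enum_rank_in (inY s) (enum_val s)).
by rewrite /psub mxE !enum_rankK_in.
Qed.

Lemma sum_enum (F : fieldType) n (X : {set 'I_n}) (f : 'I_n -> F) :
  (forall k, k \notin X -> f k = 0) ->
  \sum_(s < #|X|) f (enum_val s) = \sum_k f k.
Proof.
move=> f0; rewrite -(big_enum_val _ (A := mem X)) /= .
rewrite [RHS](bigID (fun k => k \in X)) /= [X in _ + X]big1 ?addr0 //.

Qed.

Lemma uniq_sol (F : fieldType) n (U I : {set 'I_n}) (M : 'M[F]_n) (x : 'I_n -> F) :
  psub M (U :\: I) \in unitmx -> (forall k, k \notin U :\: I -> x k = 0) ->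
  (forall t, t \in U :\: I -> vm x M t = 0) -> forall k, x k = 0.
Proof.
move=> uA x0 sol k; case: (boolP (k \in U :\: I)) => kX; last exact: x0.
set X := U :\: I in uA x0 sol kX *.
pose v : 'rV_#|X| := \row_s x (enum_val s).
have v0 : v *m psub M X = 0.
  apply/rowP => t; rewrite !mxE.
  under eq_bigr do rewrite !mxE.
  rewrite (sum_enum (f := fun k => x k * M k (enum_val t))); last by move=> j /x0 ->; rewrite mul0r.
  by apply: sol; apply: enum_valP.
have : v = 0 by rewrite -(mulmxK uA v) v0 mul0mx.
move/rowP/(_ (enum_rank_in kX k)); rewrite !mxE enum_rankK_in //.
Qed.


Lemma delta_sum (F : fieldType) n (f : 'I_n -> F) a : \sum_k (a == k)%:R * f k = f a.
Proof.
rewrite (bigD1 a) //= eqxx mul1r big1 ?addr0 // => k ka.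
by rewrite eq_sym (negbTE ka) mul0r.
Qed.

Lemma delta_sum' (F : fieldType) n (f : 'I_n -> F) a : \sum_k (k == a)%:R * f k = f a.
Proof. by under eq_bigr do rewrite eq_sym; apply: delta_sum. Qed.

Lemma vm_split (F : fieldType) n m (e : 'I_m -> 'I_n) (c : 'I_m -> 'I_m -> F) (d : 'I_n -> F)
  (M : 'M[F]_n) j :
  vm (fun k => d k - \sum_s \sum_t c s t * (e t == k)%:R) M j =
  vm d M j - \sum_s \sum_t c s t * M (e t) j.
Proof.
rewrite /vm; under eq_bigr do rewrite mulrBl; rewrite sumrB; congr (_ - _).
under eq_bigr do rewrite mulr_suml.
rewrite exchange_big /=; apply: eq_bigr => s _.
under eq_bigr do rewrite mulr_suml.
rewrite exchange_big /=; apply: eq_bigr => t _.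
under eq_bigr do rewrite -mulrA.
by rewrite -mulr_sumr delta_sum.
Qed.

Lemma red_spec (F : fieldType) n (U I : {set 'I_n}) (M : 'M[F]_n) :
  I != set0 -> I \subset U -> psub M (U :\: I) \in unitmx ->
  exists S, red U M I = Some S /\
   (forall i j, ~~ ((i \in I) && (j \in I)) -> S i j = 0) /\
   exists xf : 'I_n -> 'I_n -> F, forall i, i \in I -> let x := xf i in
     [/\ forall k, k \notin U -> x k = 0,
         forall k, k \in I -> x k = (k == i)%:R,
         forall t, t \in U :\: I -> vm x M t = 0 &
         forall j, j \in I -> S i j = vm x M j].
Proof.
move=> I0 IU uA; rewrite /red I0 IU /=.
have vmd : forall i j, vm (fun k => (if k \in I then (k == i)%:R else 0)) M j = 
    (if i \in I then M i j else 0).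
  move=> i j; rewrite /vm.
  case: (boolP (i \in I)) => iI.
    rewrite -(delta_sum' (fun k => M k j) i); apply: eq_bigr => k _.
    by case: eqP => [->|_]; rewrite ?iI // if_same.
  rewrite big1 // => k _; case: ifP; rewrite ?mul0r //.
  by case: eqP => [->|_]; rewrite ?mul0r // (negbTE iI).
case: eqP => [IU'|IU'].
  eexists; split; first reflexivity; split.
    by move=> i j /negbTE h; rewrite mxE h.
  exists (fun i k => (k == i)%:R) => i iI; split.
  - by move=> k kU; rewrite -IU' in kU; case: eqP kU => // ->; rewrite iI.
  - by [].
  - by move=> t; rewrite IU' setDv inE.
  - by move=> j jI; rewrite mxE iI jI /vm delta_sum'.
rewrite uA; eexists; split; first reflexivity; split.
  by move=> i j /negbTE h; rewrite mxE h.
set X := U :\: I in uA *.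
set Ai := invmx (psub M X).
exists (fun i k => (if k \in I then (k == i)%:R else 0) -
   \sum_s \sum_t (M i (enum_val s) * Ai s t) * (enum_val t == k)%:R) => i iI; split.
- move=> k kU.
  have -> : k \in I = false by apply/negP => /(subsetP IU); rewrite (negbTE kU).
  rewrite big1 ?subr0 // => s _; rewrite big1 // => t _.
  case: eqP; rewrite ?mulr0 // => ek; move: (enum_valP t); rewrite ek inE => /andP[_ kU'].
  by rewrite kU' in kU.
- move=> k kI; rewrite kI big1 ?subr0 // => s _; rewrite big1 // => t _.
  case: eqP; rewrite ?mulr0 // => ek; move: (enum_valP t); rewrite ek inE kI.
  by [].
- move=> t tX; rewrite vm_split vmd iI.
  rewrite -(enum_rankK_in tX tX).
  set r := enum_rank_in tX t.
  have -> : \sum_s \sum_u M i (enum_val s) * Ai s u * M (enum_val u) (enum_val r) =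
            \sum_s M i (enum_val s) * (s == r)%:R.
    apply: eq_bigr => s _.
    have : (Ai *m psub M X) s r = (s == r)%:R by rewrite mulVmx // mxE.
    rewrite mxE => <-; rewrite mulr_sumr; apply: eq_bigr => u _.
    by rewrite /psub mxE mulrA.
  rewrite (bigD1 r) //= eqxx mulr1 big1 ?addr0 ?subrr // => s /negbTE ->.
  by rewrite mulr0.
- move=> j jI; rewrite vm_split vmd mxE iI jI.
  by [].
Qed.

Lemma vm_ext (F : fieldType) n (x y : 'I_n -> F) M j : (forall k, x k = y k) -> vm x M j = vm y M j.
Proof. by move=> e; apply: eq_bigr => k _; rewrite e. Qed.

Lemma vm_sub (F : fieldType) n (x y : 'I_n -> F) M j : vm (fun k => x k - y k) M j = vm x M j - vm y M j.
Proof. by rewrite /vm -sumrB; apply: eq_bigr => k _; rewrite mulrBl. Qed.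

Lemma vm_lin (F : fieldType) n (w : 'I_n -> F) (xf : 'I_n -> 'I_n -> F) M t :
  vm (fun k => \sum_i w i * xf i k) M t = \sum_i w i * vm (xf i) M t.
Proof.
rewrite /vm; under eq_bigr do rewrite mulr_suml.
rewrite exchange_big; apply: eq_bigr => i _; rewrite mulr_sumr.
by apply: eq_bigr => k _; rewrite mulrA.
Qed.

Lemma core (F : fieldType) n (M : 'M[F]_n) (J K : {set 'I_n}) :
  K != set0 -> K \subset J -> psub M (setT :\: J) \in unitmx ->
  psub M (setT :\: K) \in unitmx ->
  exists T, red setT M J = Some T /\ red J T K = red setT M K.
Proof.
move=> K0 KJ uJ uK.
have J0 : J != set0.
  apply: contraNneq K0 => J0; apply/eqP; apply/setP => k; rewrite inE.
  by apply/negP => /(subsetP KJ); rewrite J0 inE.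
have [T [HT [Tz [xf Hx]]]] := red_spec J0 (subsetT J) uJ.
exists T; split => //.
have L : forall w : 'I_n -> F, (forall k, k \notin J -> w k = 0) ->
   let Z := fun k => \sum_i w i * xf i k in
   [/\ forall k, k \in J -> Z k = w k,
       forall t, t \notin J -> vm Z M t = 0 &
       forall t, t \in J -> vm Z M t = vm w T t].
  move=> w w0 Z; split.
  - move=> k kJ; rewrite /Z -(delta_sum' w k); apply: eq_bigr => i _.
    case: (boolP (i \in J)) => iJ; last by rewrite w0 // mul0r mulr0.
    by have [_ h _ _] := Hx i iJ; rewrite h // mulrC eq_sym.
  - move=> t tJ; rewrite vm_lin big1 // => i _.
    case: (boolP (i \in J)) => iJ; last by rewrite w0 // mul0r.
    by have [_ _ h _] := Hx i iJ; rewrite h ?mulr0 // !inE tJ.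
  - move=> t tJ; rewrite vm_lin; apply: eq_bigr => i _.
    case: (boolP (i \in J)) => iJ; last by rewrite w0 // !mul0r.
    by have [_ _ _ h] := Hx i iJ; rewrite h.
have uT : psub T (J :\: K) \in unitmx.
  rewrite unitmxE unitfE; apply/negP => /det0P [v vn0 vA].
  set X := J :\: K in v vn0 vA.
  pose w k := \sum_s v 0 s * (enum_val s == k)%:R.
  have w0 : forall k, k \notin X -> w k = 0.
    move=> k kX; rewrite /w big1 // => s _; case: eqP; rewrite ?mulr0 // => ek.
    by move: (enum_valP s); rewrite ek (negbTE kX).
  have wJ : forall k, k \notin J -> w k = 0.
    by move=> k kJ; apply: w0; rewrite !inE (negbTE kJ) andbF.
  have we : forall s, w (enum_val s) = v 0 s.
    move=> s; rewrite /w (bigD1 s) //= eqxx mulr1 big1 ?addr0 // => s' /negbTE ss.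
    by rewrite (inj_eq enum_val_inj) ss mulr0.
  have [ZJ ZJc ZT] := L w wJ.
  have Z0 := @uniq_sol F n setT K M (fun k => \sum_i w i * xf i k) uK.
  have : forall k, \sum_i w i * xf i k = 0.
    apply: Z0.
      move=> k; rewrite !inE andbT negbK => kK.
      by rewrite ZJ ?(subsetP KJ) // w0 // !inE kK.
    move=> t; rewrite !inE andbT => tK.
    case: (boolP (t \in J)) => tJ; last by rewrite ZJc.
    rewrite ZT //.
    have tX : t \in X by rewrite !inE tK tJ.
    rewrite -(enum_rankK_in tX tX).
    move/rowP: vA => /(_ (enum_rank_in tX t)); rewrite !mxE => <-.
    rewrite /vm /w; under eq_bigr do rewrite mulr_suml.
    rewrite exchange_big; apply: eq_bigr => s _.
    under eq_bigr do rewrite -mulrA.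
    by rewrite -mulr_sumr delta_sum /psub mxE.
  move=> Zz; apply: (negP vn0); apply/eqP/rowP => s; rewrite mxE -we.
  have eJ : enum_val s \in J by move: (enum_valP s); rewrite inE => /andP[].
  by rewrite -ZJ.
have [R' [HR' [R'z [yf Hy]]]] := red_spec K0 KJ uT.
have [R [HR [Rz [zf Hz]]]] := red_spec K0 (subsetT K) uK.
rewrite HR' HR; congr Some; apply/matrixP => i j.
case: (boolP ((i \in K) && (j \in K))); last by move=> h; rewrite Rz // R'z.
case/andP => iK jK.
have [y0 yK ysol yR] := Hy i iK.
have [z0 zK zsol zR] := Hz i iK.
have [ZJ ZJc ZT] := L (yf i) y0.
have eZ : forall k, \sum_l yf i l * xf l k - zf i k = 0.
  apply: (@uniq_sol F n setT K M _ uK).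
    move=> k; rewrite !inE andbT negbK => kK.
    by rewrite ZJ ?(subsetP KJ) // yK // zK // subrr.
  move=> t; rewrite !inE andbT => tK.
  rewrite vm_sub zsol ?inE ?tK // subr0.
  case: (boolP (t \in J)) => tJ; last by rewrite ZJc.
  by rewrite ZT // ysol // !inE tK tJ.
rewrite yR // zR // -ZT ?(subsetP KJ) //; apply: vm_ext => k.
by apply/eqP; rewrite -subr_eq0 eZ.
Qed.

Lemma red_seq_rcons (F : fieldType) n (Is : seq {set 'I_n}) (U J : {set 'I_n}) (M : 'M[F]_n) :
  red_seq U M (rcons Is J) = obind (fun M' => red (last U Is) M' J) (red_seq U M Is).
Proof.
elim: Is U M => [|K Is IH] U M /=; first by case: (red U M J).
by case: (red U M K) => //= M'; rewrite IH.
Qed.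

Lemma last_iota a k : last a (iota a.+1 k) = (a + k)%N.
Proof. elim: k a => [|k IH] a /=; first by rewrite addn0. by rewrite IH addSnnS. Qed.

Theorem lemma2 (n : nat) (M : 'M[W]_n) (m : nat) (I : nat -> {set 'I_n}) :
  (1 <= m)%N ->
  (forall k, (1 <= k)%N -> (k < m)%N -> I k.+1 \subset I k) ->
  I m != set0 ->
  upper_tri_nzdiag (psub M (~: I m)) ->
  exists N : 'M[W]_n,
    red_seq [set: 'I_n] M [seq I k | k <- iota 1 m] = Some N /\
    red [set: 'I_n] M (I m) = Some N.
Proof.
move=> m1 chain Im0 tri.
have sub : forall d j, (1 <= j)%N -> (j + d <= m)%N -> I (j + d)%N \subset I j.
  elim=> [|d IH] j j1 jd; first by rewrite addn0.
  apply: subset_trans (IH j j1 (ltnW _)); last by rewrite addnS in jd.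
  by rewrite addnS; apply: chain; [apply: leq_trans j1 (leq_addr _ _) | rewrite -addnS].
have subm : forall j, (1 <= j)%N -> (j <= m)%N -> I m \subset I j.
  by move=> j j1 jm; have := sub (m - j)%N j j1; rewrite subnKC //; apply.
have uni : forall j, (1 <= j)%N -> (j <= m)%N -> psub M (setT :\: I j) \in unitmx.
  move=> j j1 jm; apply: (psub_unit_sub _ tri); apply/subsetP => k.
  rewrite !inE andbT; apply: contra; exact: (subsetP (subm j j1 jm)).
have ne : forall j, (1 <= j)%N -> (j <= m)%N -> I j != set0.
  move=> j j1 jm; apply: contraNneq Im0 => e; apply/eqP/setP => k; rewrite inE.
  by apply/negP => /(subsetP (subm j j1 jm)); rewrite e inE.
suff : forall k, (1 <= k)%N -> (k <= m)%N -> exists N : 'M[W]_n,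
    red_seq [set: 'I_n] M [seq I j | j <- iota 1 k] = Some N /\
    red [set: 'I_n] M (I k) = Some N by apply.
have lk : forall k, (0 < k)%N -> last setT [seq I j | j <- iota 1 k] = I k.
  by case=> // k' _ /=; rewrite last_map last_iota add1n.
elim=> [//|k IH] _ km.
case: (posnP k) => [k0|kpos].
  subst k; have [S [HS _]] := red_spec (ne 1%N isT km) (subsetT _) (uni 1%N isT km).
  by exists S; rewrite /= HS.
have [N [HN HN']] := IH kpos (ltnW km).
have [T [HT HTK]] := core (ne k.+1 isT km) (chain k kpos km) (uni k kpos (ltnW km)) (uni k.+1 isT km).
have [R [HR _]] := red_spec (ne k.+1 isT km) (subsetT _) (uni k.+1 isT km).
exists R; split => //.
rewrite (_ : iota 1 k.+1 = iota 1 (k + 1)%N); last by rewrite addn1.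
rewrite iotaD map_cat cats1 red_seq_rcons HN /=.
rewrite lk // (add1n k).
by move: HT; rewrite HN' => -[->]; rewrite HTK.
Qed.
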